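(* Let $\mathcal{X}=\{x_1,\dots,x_M\}$ and $\mathcal{Y}=\{y_1,\dots,y_N\}$ be finite sets (in this fixed enumeration), let $p(x)$ be a probability distribution on $\mathcal{X}$, and let $c:\mathcal{X}\times\mathcal{Y}\to[0,\infty]$ be a cost function that is staircase nondecreasing, i.e. (i) for all $1\le i<j\le M$ and all $y\in\mathcal{Y}$, if $c(x_i,y)=\infty$ then $c(x_j,y)=\infty$; and (ii) for all $1\le i<j\le N$ and all $x\in\mathcal{X}$, if $c(x,y_i)<\infty$ then $c(x,y_i)\le c(x,y_j)<\infty$. Assume that at least one protection scheme (defined below) exists. Then: 1. For every $\alpha>0$, $$\min_{(\mathscr{L},\mathscr{C})\in S}\ \mathscr{C}+\alpha\mathscr{L} \;=\; \min_{(\mathscr{L},\mathscr{C})\in S_d}\ \mathscr{C}+\alpha\mathscr{L}.$$ 2. For every $L\ge 1$, the pair $(L,C^*(L))$ is achieved by $\mathbf{P}=\lambda\mathbf{P}_1+(1-\lambda)\mathbf{P}_2$ for some $\lambda\in[0,1]$ and some deterministic protection schemes $\mathbf{P}_1,\mathbf{P}_2$, such that $\mathscr{L}(\mathbf{P})\le L$ and $C^*(L)\le \lambda\, C^*_d(\mathscr{L}(\mathbf{P}_1))+(1-\lambda)\,C^*_d(\mathscr{L}(\mathbf{P}_2))$.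
   Context: For any $M\times N$ matrix $\mathbf{A}=\{a_{xy}\}$ (rows indexed by $\mathcal{X}$, columns by $\mathcal{Y}$), the total cost is $\mathscr{C}(\mathbf{A})=\sum_{x,y}p(x)c(x,y)a_{xy}$ (with the convention $0\cdot\infty=0$), and the exponentiated maximal leakage (exp-leak) is $\mathscr{L}(\mathbf{A})=\sum_{y}\max_{x}a_{xy}$. A protection scheme is an $M\times N$ matrix $\mathbf{P}=\{p_{xy}\}$ with nonnegative entries, each row summing to $1$ (interpreted as $p_{xy}=\Pr(Y=y\mid X=x)$), and with $\mathscr{C}(\mathbf{P})<\infty$. It is deterministic if every entry is $0$ or $1$. A pair $(L,C)$ is achieved by $\mathbf{P}$ if $\mathscr{L}(\mathbf{P})\le L$ and $\mathscr{C}(\mathbf{P})\le C$. $S$ is the set of all pairs $(L,C)$ achieved by some protection scheme, and $S_d$ the set of all pairs achieved by some deterministic protection scheme. $C^*(L)=\inf\{C:(L,C)\in S\}$ and $C^*_d(L)=\inf\{C:(L,C)\in S_d\}$. *)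

(* Defs.v *)
From HB Require Import structures.
From mathcomp Require Import all_boot all_order all_algebra.
From mathcomp Require Import all_classical all_reals.
From mathcomp Require Import ereal.
Set Implicit Arguments. Unset Strict Implicit. Unset Printing Implicit Defensive.
Import Order.TTheory GRing.Theory Num.Theory.
Local Open Scope ring_scope.

Section Defs.
Variables (R : realType) (M N : nat).

(* x_i is the ordinal i : 'I_M, y_j is j : 'I_N (0-based enumeration). *)

Definition is_distribution (p : 'I_M -> R) : Prop :=
  (forall x, 0 <= p x) /\ \sum_(x < M) p x = 1.

Definition staircase_nondecreasing (c : 'I_M -> 'I_N -> \bar R) : Prop :=
  (forall (i j : 'I_M) (y : 'I_N), (i < j)%N -> c i y = +oo%E -> c j y = +oo%E) /\
  (forall (i j : 'I_N) (x : 'I_M), (i < j)%N -> (c x i < +oo)%E ->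
      (c x i <= c x j)%E /\ (c x j < +oo)%E).

(* total cost: sum_{x,y} p(x) c(x,y) a_xy, with 0 * oo = 0 (as in mule) *)
Definition cost (p : 'I_M -> R) (c : 'I_M -> 'I_N -> \bar R) (A : 'M[R]_(M, N))
  : \bar R :=
  (\sum_(x < M) \sum_(y < N) ((p x * A x y)%:E * c x y))%E.

(* exp-leak: sum_y max_x a_xy (for matrices with nonnegative entries the
   max over the nonempty set X coincides with \big[max/0]) *)
Definition leak (A : 'M[R]_(M, N)) : R :=
  \sum_(y < N) \big[Num.max/0]_(x < M) A x y.

Definition is_scheme (p : 'I_M -> R) (c : 'I_M -> 'I_N -> \bar R)
  (P : 'M[R]_(M, N)) : Prop :=
  (forall x y, 0 <= P x y) /\ (forall x, \sum_(y < N) P x y = 1) /\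
  (cost p c P < +oo)%E.

Definition deterministic (P : 'M[R]_(M, N)) : Prop :=
  forall x y, P x y = 0 \/ P x y = 1.

Definition achieves p c (P : 'M[R]_(M, N)) (L C : R) : Prop :=
  leak P <= L /\ (cost p c P <= C%:E)%E.

Definition S p c : set (R * R) :=
  [set LC | exists P, is_scheme p c P /\ achieves p c P LC.1 LC.2].

Definition S_d p c : set (R * R) :=
  [set LC | exists P, is_scheme p c P /\ deterministic P /\ achieves p c P LC.1 LC.2].

Definition Cstar p c (L : R) : R := inf [set C | S p c (L, C)].
Definition Cstar_d p c (L : R) : R := inf [set C | S_d p c (L, C)].

(* "min_{(L,C) in T} C + alpha L = v": the minimum exists and equals v *)
Definition is_min_obj (T : set (R * R)) (alpha v : R) : Prop :=
  (exists LC, T LC /\ LC.2 + alpha * LC.1 = v) /\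
  (forall LC, T LC -> v <= LC.2 + alpha * LC.1).

End Defs.

(* Main.v *)
Require Import Defs.
From HB Require Import structures.
From mathcomp Require Import all_boot all_order all_algebra.
From mathcomp Require Import all_classical all_reals.
From mathcomp Require Import ereal.
From mathcomp Require Import ring lra zify.
From Stdlib Require Import Lia.
Import Order.TTheory GRing.Theory Num.Theory.
Local Open Scope ring_scope.
Set Implicit Arguments. Unset Strict Implicit. Unset Printing Implicit Defensive.
Lemma seq_argmin (R : realType) (T : eqType) (s : seq T) (F : T -> R) :
  s != [::] -> exists2 x, x \in s & forall y, y \in s -> F x <= F y.
Proof.
elim: s => [//|a s IH] _.
case: (eqVneq s [::]) => [->|ne].
  by exists a; rewrite ?mem_seq1 // => y; rewrite mem_seq1 => /eqP->.
have [b bs hb] := IH ne.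
case: (leP (F a) (F b)) => h.
  exists a; first by rewrite mem_head.
  move=> y; rewrite in_cons => /orP[/eqP->//|ys].
  exact: le_trans h (hb _ ys).
exists b; first by rewrite in_cons bs orbT.
move=> y; rewrite in_cons => /orP[/eqP->|ys]; [exact: ltW | exact: hb].
Qed.

Lemma fin_argmin (R : realType) (T : finType) (P : pred T) (F : T -> R) :
  (exists x, P x) -> exists x, P x /\ forall y, P y -> F x <= F y.
Proof.
move=> [x0 Px0].
have ne : [seq x <- enum T | P x] != [::].
  apply/eqP => e.
  have : x0 \in [seq x <- enum T | P x] by rewrite mem_filter Px0 mem_enum.
  by rewrite e.
have [x xs hx] := seq_argmin F ne.
move: xs; rewrite mem_filter => /andP[Px _].
exists x; split => // y Py; apply: hx; by rewrite mem_filter Py mem_enum.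
Qed.

Lemma abel_aux (R : realType) (n : nat) (d cc : nat -> R) :
  (forall k, (k <= n)%N -> 0 <= \sum_(i < k) d i) ->
  (forall i, (i.+1 < n)%N -> cc i <= cc i.+1) ->
  forall k, (k < n)%N ->
  \sum_(i < k.+1) d i * cc i <= (\sum_(i < k.+1) d i) * cc k.
Proof.
move=> hD hc; elim=> [|k IH] hk.
  by rewrite !big_ord_recr !big_ord0 /= !add0r.
rewrite big_ord_recr /= [X in _ <= X * _]big_ord_recr /= mulrDl.
apply: lerD => //.
apply: le_trans (IH (ltnW hk)) _.
apply: ler_wpM2l; first by apply: hD; apply: ltnW.
exact: hc.
Qed.

Lemma abel_le (R : realType) (n : nat) (d cc : nat -> R) :
  (forall k, (k <= n)%N -> 0 <= \sum_(i < k) d i) ->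
  \sum_(i < n) d i = 0 ->
  (forall i, (i.+1 < n)%N -> cc i <= cc i.+1) ->
  \sum_(i < n) d i * cc i <= 0.
Proof.
move=> hD h0 hc; case: n hD h0 hc => [|k] hD h0 hc; first by rewrite big_ord0.
apply: le_trans (abel_aux hD hc (ltnSn k)) _.
by rewrite h0 mul0r.
Qed.
Section Expect.
Variable R : realType.
Variable U : seq R.
Hypothesis Uuniq : uniq U.
Hypothesis U0 : 0 \in U.
Hypothesis Urange : forall u, u \in U -> 0 <= u < 1.

Definition nxt (u : R) : R := \big[Num.min/1]_(v <- U | u < v) v.
Definition wt (u : R) : R := nxt u - u.

Lemma wt_ge0 u : u \in U -> 0 <= wt u.
Proof.
move=> uU; rewrite /wt subr_ge0 /nxt.
apply: le_bigmin => [|v /ltW //].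
by have /andP[_ /ltW] := Urange uU.
Qed.

Lemma tele_aux n : forall phi, (count (fun u => (u < phi)%R) U <= n)%N ->
  (phi \in U) || (phi == 1) -> \sum_(u <- U | u < phi) wt u = phi.
Proof.
elim: n => [|n IH] phi hn hphi.
  have phi0 : 0 <= phi.
    case/orP: hphi => [/Urange/andP[]//|/eqP->]; exact: ler01.
  have e : phi = 0.
    apply/eqP; rewrite eq_le phi0 andbT leNgt; apply/negP => h.
    have : has (fun u => (u < phi)%R) U by apply/hasP; exists 0.
    by rewrite has_count; move: hn; rewrite leqn0 => /eqP->.
  rewrite e big_seq_cond big1 // => u /andP[uU].
  by have /andP[/le_gtF -> _] := Urange uU.
case: (boolP (has (fun u => u < phi) U)) => hh; last first.
  rewrite big_hasC //; have phi0 : 0 <= phi.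
    case/orP: hphi => [/Urange/andP[]//|/eqP->]; exact: ler01.
  apply/esym/eqP; rewrite eq_le phi0 andbT leNgt; apply/negP => h.
  by move/hasPn: hh => /(_ 0 U0); rewrite h.
have ne : [seq u <- U | u < phi] != [::].
  by rewrite -size_eq0 size_filter -lt0n -has_count.
have [us] := seq_argmin (fun u => - u) ne.
rewrite mem_filter => /andP[usphi usU] hmax.
have hmax' : forall u, u \in U -> u < phi -> u <= us.
  by move=> u uU uphi; rewrite -lerN2; apply: hmax; rewrite mem_filter uphi uU.
have nxtus : nxt us = phi.
  apply/eqP; rewrite eq_le; apply/andP; split.
    case/orP: hphi => [phiU|/eqP->]; last exact: bigmin_le_id.
    by apply: (ge_bigmin_seq 1 phi _ id phiU).
  rewrite /nxt big_seq_cond; apply: le_bigmin.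
    case/orP: hphi => [/Urange/andP[_ /ltW]//|/eqP->//].
  move=> v /andP[vU usv]; rewrite leNgt; apply/negP => vphi.
  by have := hmax' v vU vphi; rewrite leNgt usv.
have usphiU : (us \in U) || (us == 1) by rewrite usU.
have cnt : (count (fun u => (u < us)%R) U <= n)%N.
  rewrite -ltnS; apply: leq_trans hn.
  have -> : count (fun u => (u < phi)%R) U = (count (fun u => (u < us)%R) U +
      count (fun u => ~~ (u < us)%R && (u < phi)%R) U)%N.
    rewrite -size_filter -(count_predC (fun u => (u < us)%R)) !count_filter.
    congr addn; apply: eq_count => u /=.
    by case: (ltP u us) => //= h; rewrite (lt_trans h usphi).
  rewrite -addn1; apply: leq_add => //.
  rewrite -has_count; apply/hasP; exists us => //=.
  by rewrite ltxx usphi.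
rewrite big_mkcond (bigD1_seq us) //= usphi.
rewrite (_ : \sum_(i <- U | i != us) _ = \sum_(u <- U | u < us) wt u); last first.
  rewrite [RHS]big_mkcond [LHS]big_mkcond [LHS]big_seq [RHS]big_seq.
  apply: eq_bigr => u uU.
  case: (eqVneq u us) => [->|neu] /=; first by rewrite ltxx.
  case: (ltP u phi) => h.
    by have := hmax' u uU h; rewrite le_eqVlt (negPf neu) /= => ->.
  by rewrite ltNge (le_trans (ltW usphi) h).
by rewrite IH // /wt nxtus subrK.
Qed.

Lemma tele phi : (phi \in U) || (phi == 1) -> \sum_(u <- U | u < phi) wt u = phi.
Proof. exact: (@tele_aux (count (fun u => (u < phi)%R) U)). Qed.

Lemma wt_sum1 : \sum_(u <- U) wt u = 1.
Proof.
rewrite -[RHS](@tele 1) ?eqxx ?orbT // big_seq_cond [RHS]big_seq_cond.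
apply: eq_bigl => u; case uU: (u \in U) => //=.
by have /andP[_ ->] := Urange uU.
Qed.


Definition EE (F : R -> R) : R := \sum_(u <- U) wt u * F u.

Lemma EE_sum (I : finType) (G : I -> R -> R) :
  EE (fun u => \sum_i G i u) = \sum_i EE (G i).
Proof.
rewrite /EE; under eq_bigr do rewrite mulr_sumr.
exact: exchange_big.
Qed.

Lemma EE_add F G : EE (fun u => F u + G u) = EE F + EE G.
Proof. by rewrite /EE -big_split; apply: eq_bigr => u _; rewrite mulrDr. Qed.

Lemma EE_sub F G : EE (fun u => F u - G u) = EE F - EE G.
Proof.
rewrite /EE -sumrN -big_split; apply: eq_bigr => u _.
by rewrite mulrBr.
Qed.

Lemma EE_mulc a F : EE (fun u => a * F u) = a * EE F.
Proof. by rewrite /EE mulr_sumr; apply: eq_bigr => u _; rewrite mulrCA. Qed.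

Lemma EE_const a : EE (fun _ => a) = a.
Proof. by rewrite /EE -mulr_suml wt_sum1 mul1r. Qed.

Lemma EE_mono F G : (forall u, u \in U -> F u <= G u) -> EE F <= EE G.
Proof.
move=> h; rewrite /EE big_seq [X in _ <= X]big_seq; apply: ler_sum => u uU.
by apply: ler_wpM2l; [exact: wt_ge0 | exact: h].
Qed.

Lemma EE_eq F G : (forall u, u \in U -> F u = G u) -> EE F = EE G.
Proof.
move=> h; rewrite /EE; apply: eq_big_seq => u uU; by rewrite h.
Qed.

Lemma EE_indic phi : (phi \in U) || (phi == 1) ->
  EE (fun u => ((u < phi)%R : nat)%:R) = phi.
Proof.
move=> h; rewrite -[RHS](tele h) /EE [RHS]big_mkcond /=; apply: eq_bigr => u _.
by case: (u < phi); rewrite ?mulr1 ?mulr0.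
Qed.

End Expect.
Definition fracp (R : realType) (b : R) : R := b - (Num.floor b)%:~R.

Lemma frac_range (R : realType) (b : R) : 0 <= fracp b < 1.
Proof.
rewrite /fracp subr_ge0 Num.Theory.floor_le /= ltrBlDl.
by have := Num.Theory.floorD1_gt b; rewrite intrD addrC.
Qed.

Lemma ceil_split (R : realType) (b u : R) : 0 <= u < 1 ->
  (Num.ceil (b - u))%:~R = (Num.floor b)%:~R + ((u < fracp b)%R : nat)%:R :> R.
Proof.
move=> /andP[u0 u1]; rewrite /fracp.
have h1 := Num.Theory.floor_le b.
have h2 := Num.Theory.floorD1_gt b; rewrite intrD in h2.
case: ltP => h /=.
  rewrite (@Num.Theory.ceil_def _ _ (Num.floor b + 1)) ?intrD //.
  apply/andP; split; first by rewrite addrK; lra.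
  lra.
rewrite (@Num.Theory.ceil_def _ _ (Num.floor b)) ?addr0 //.
apply/andP; split; rewrite ?intrB; lra.
Qed.
Lemma esum_pinfty (R : realType) (I : finType) (F : I -> \bar R) i :
  (forall j, 0 <= F j)%E -> F i = +oo%E -> (\sum_j F j = +oo)%E.
Proof.
move=> h0 hi; rewrite (bigD1 i) //= hi addye //.
have : (0 <= \sum_(j | j != i) F j)%E by apply: sume_ge0 => j _.
by case: (\sum_(j | j != i) F j)%E.
Qed.

Section Main.
Variables (R : realType) (M N' : nat).
Local Notation N := N'.+1.
Variables (p : 'I_M -> R) (c : 'I_M -> 'I_N -> \bar R).
Hypothesis hp : is_distribution p.
Hypothesis hc0 : forall x y, (0 <= c x y)%E.
Hypothesis hc : staircase_nondecreasing c.

Definition cr x y := fine (c x y).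
Definition rc (Q : 'M[R]_(M,N)) : R :=
  \sum_(x < M) \sum_(y < N) p x * Q x y * cr x y.
Definition okm (Q : 'M[R]_(M,N)) :=
  forall x y, 0 < p x -> 0 < Q x y -> (c x y < +oo)%E.
Definition nonneg (Q : 'M[R]_(M,N)) := forall x y, 0 <= Q x y.

Lemma p_ge0 x : 0 <= p x. Proof. exact: hp.1. Qed.

Lemma c_fin x y : (c x y < +oo)%E -> c x y = (cr x y)%:E.
Proof. by move=> h; rewrite /cr fineK // ge0_fin_numE. Qed.

Lemma cost_fin Q : nonneg Q -> okm Q -> cost p c Q = (rc Q)%:E.
Proof.
move=> hQ hok; rewrite /cost /rc -sumEFin; apply: eq_bigr => x _.
rewrite -sumEFin; apply: eq_bigr => y _.
have hpx := p_ge0 x; have hq := hQ x y.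
case: (eqVneq (p x) 0) => [->|px0]; first by rewrite !mul0r mul0e.
case: (eqVneq (Q x y) 0) => [->|qx0]; first by rewrite mulr0 !mul0r mul0e.
have px : 0 < p x by rewrite lt_def px0.
have qx : 0 < Q x y by rewrite lt_def qx0.
by rewrite (c_fin (hok x y px qx)) EFinM.
Qed.

Lemma cost_term_ge0 Q x y : nonneg Q -> (0 <= (p x * Q x y)%:E * c x y)%E.
Proof. by move=> hQ; apply: mule_ge0 => //; rewrite lee_fin mulr_ge0 // p_ge0. Qed.

Lemma cost_okm Q : nonneg Q -> (cost p c Q < +oo)%E -> okm Q.
Proof.
move=> hQ hcost x y px qx; rewrite ltNge leye_eq; apply/negP => /eqP cinf.
move: hcost; rewrite /cost (@esum_pinfty _ _ _ x) //.
  by move=> j; apply: sume_ge0 => k _; exact: cost_term_ge0.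
apply: (@esum_pinfty _ _ _ y) => [k|]; first exact: cost_term_ge0.
by rewrite cinf mulry gtr0_sg ?mulr_gt0 // mul1e.
Qed.

Lemma scheme_okm P : is_scheme p c P -> okm P.
Proof. by move=> [h0 [_ hcost]]; exact: cost_okm. Qed.

Lemma scheme_rc P : is_scheme p c P -> cost p c P = (rc P)%:E.
Proof. by move=> hs; apply: cost_fin (scheme_okm hs); case: hs. Qed.


Definition mx (g : {ffun 'I_M -> 'I_N}) : 'M[R]_(M,N) :=
  \matrix_(x, y) ((g x == y)%:R).

Lemma mx_nonneg g : nonneg (mx g).
Proof. by move=> x y; rewrite mxE ler0n. Qed.

Lemma mx_rows g x : \sum_(y < N) mx g x y = 1.
Proof.
rewrite (bigD1 (g x)) //= mxE eqxx big1 ?addr0 // => y hy.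
by rewrite mxE eq_sym (negPf hy).
Qed.

Lemma mx_det g : deterministic (mx g).
Proof. by move=> x y; rewrite mxE; case: (g x == y); [right|left]. Qed.

Lemma mx_scheme g : (cost p c (mx g) < +oo)%E -> is_scheme p c (mx g).
Proof. by move=> h; split; [exact: mx_nonneg | split; [exact: mx_rows|]]. Qed.

Lemma det_mx P : is_scheme p c P -> deterministic P -> exists g, P = mx g.
Proof.
move=> [h0 [hrow _]] hdet.
have ex1 : forall x, exists y, P x y == 1.
  move=> x; case: (pickP (fun y => P x y == 1)) => [y hy|hn]; first by exists y.
  have : \sum_(y < N) P x y = 0.
    apply: big1 => y _; case: (hdet x y) => // h1.
    by have := hn y; rewrite /= h1 eqxx.
  by rewrite hrow => /eqP; rewrite oner_eq0.
pose g := [ffun x => odflt ord0 [pick y | P x y == 1]].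
have hg : forall x, P x (g x) = 1.
  move=> x; rewrite ffunE; case: pickP => [y /eqP //|hn].
  by have [y hy] := ex1 x; move: (hn y); rewrite hy.
exists g; apply/matrixP => x y; rewrite mxE.
case: (eqVneq (g x) y) => [<-|ne]; first by rewrite hg.
case: (hdet x y) => // h1.
have : 2 <= \sum_(y0 < N) P x y0.
  rewrite (bigD1 (g x)) //= (bigD1 y) /=; last by rewrite eq_sym.
  rewrite hg h1 addrA lerDl; apply: sumr_ge0 => i _; exact: h0.
by rewrite hrow; lra.
Qed.

Lemma M_gt0 : (0 < M)%N.
Proof.
case: M p hp => [|//] q [_ h]; by move: h; rewrite big_ord0 => /eqP; rewrite eq_sym oner_eq0.
Qed.

Lemma leak_ge1 P : nonneg P -> (forall x, \sum_(y < N) P x y = 1) -> 1 <= leak P.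
Proof.
move=> h0 hrow; pose x0 := Ordinal M_gt0.
rewrite -(hrow x0) /leak; apply: ler_sum => y _.
exact: (le_bigmax _ (fun x => P x y) x0).
Qed.

Lemma bigmax_ge0 (Q : 'M[R]_(M,N)) y : 0 <= \big[Num.max/0]_(x < M) Q x y.
Proof. by elim/big_rec: _ => // i v _ hv; rewrite le_max hv orbT. Qed.

Lemma leak_mix P1 P2 th : nonneg P1 -> nonneg P2 -> 0 <= th <= 1 ->
  leak (th *: P1 + (1 - th) *: P2) <= th * leak P1 + (1 - th) * leak P2.
Proof.
move=> h1 h2 /andP[t0 t1]; rewrite /leak !mulr_sumr -big_split /=.
apply: ler_sum => y _; apply: bigmax_le.
  by apply: addr_ge0; apply: mulr_ge0 => //; rewrite ?subr_ge0 //; apply: bigmax_ge0.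
move=> x _; rewrite !mxE; apply: lerD; apply: ler_wpM2l; rewrite ?subr_ge0 //.
  exact: (le_bigmax _ (fun x => P1 x y) x).
exact: (le_bigmax _ (fun x => P2 x y) x).
Qed.


Section Round.
Variable P : 'M[R]_(M,N).
Hypothesis hP : is_scheme p c P.

Definition tt (y : 'I_N) : R := \big[Num.max/0]_(x < M) P x y.
Definition SS (k : nat) : R := \sum_(y < N | (y < k)%N) tt y.
Definition fx (x : 'I_M) : 'I_N :=
  if [pick y | 0 < P x y] is Some y0 then [arg min_(y < y0 | 0 < P x y) (y : nat)]
  else ord0.

Lemma P_ge0 x y : 0 <= P x y. Proof. by case: hP. Qed.
Lemma P_rows x : \sum_(y < N) P x y = 1. Proof. by case: hP => _ []. Qed.

Lemma tt_ge0 y : 0 <= tt y. Proof. exact: bigmax_ge0. Qed.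
Lemma P_le_tt x y : P x y <= tt y. Proof. exact: (le_bigmax _ (fun x => P x y) x). Qed.

Lemma SS_mono k k' : (k <= k')%N -> SS k <= SS k'.
Proof.
move=> hk; rewrite /SS [X in X <= _]big_mkcond [X in _ <= X]big_mkcond /=.
apply: ler_sum => y _; case: ifP => h1; last by case: ifP => _ //; exact: tt_ge0.
by rewrite (leq_trans h1 hk).
Qed.

Lemma SS0 : SS 0 = 0. Proof. by rewrite /SS big_pred0. Qed.
Lemma SSN : SS N = leak P.
Proof. by rewrite /SS /leak; apply: eq_bigl => y; rewrite ltn_ord. Qed.

Lemma SS_diff a b : (a <= b)%N -> SS b - SS a = \sum_(y < N | (a <= y < b)%N) tt y.
Proof.
move=> hab; rewrite /SS (bigID (fun y : 'I_N => (y < a)%N)) /=.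
rewrite (_ : \sum_(i < N | (i < b)%N && (i < a)%N) tt i = \sum_(i < N | (i < a)%N) tt i).
  rewrite addrC addrK; apply: eq_bigl => y; by rewrite -leqNgt andbC.
by apply: eq_bigl => y; case: (ltnP y a) => h; rewrite ?andbF ?andbT // (leq_trans h hab).
Qed.

Lemma fx_spec x : 0 < P x (fx x) /\ forall y : 'I_N, 0 < P x y -> (fx x <= y)%N.
Proof.
rewrite /fx; case: pickP => [y0 hy0|hn].
  by case: arg_minnP => // i hi hmin; split.
have : \sum_(y < N) P x y = 0.
  apply: big1 => y _; have := hn y; rewrite /= lt_def P_ge0 andbT => /negbFE/eqP//.
by rewrite P_rows => /eqP; rewrite oner_eq0.
Qed.

Lemma P_zero x (y : 'I_N) : (y < fx x)%N -> P x y = 0.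
Proof.
move=> hy; have [_ hm] := fx_spec x.
apply/eqP; rewrite eq_le P_ge0 andbT leNgt; apply/negP => h.
by have := hm y h; rewrite leqNgt hy.
Qed.

Lemma c_fin_f x (y : 'I_N) : 0 < p x -> (fx x <= y)%N -> (c x y < +oo)%E.
Proof.
move=> px hy; have [hpos _] := fx_spec x.
have hf := scheme_okm hP px hpos.
move: hy; rewrite leq_eqVlt => /orP[/eqP e|lt].
  by have -> : y = fx x by apply: val_inj.
by have [] := hc.2 (fx x) y x lt hf.
Qed.

Lemma P_sum_from x b : \sum_(y < N | (y < b)%N) P x y =
   \sum_(y < N | (fx x <= y < b)%N) P x y.
Proof.
rewrite (bigID (fun y : 'I_N => (fx x <= y)%N)) /= [X in _ + X]big1 ?addr0.
  by apply: eq_bigl => y; rewrite andbC.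
by move=> y /andP[_]; rewrite -ltnNge; apply: P_zero.
Qed.

Lemma SS_ge1 x : 1 <= SS N - SS (fx x).
Proof.
rewrite SS_diff; last exact: ltnW.
rewrite -(P_rows x) (_ : \sum_(y < N) P x y = \sum_(y < N | (y < N)%N) P x y); last first.
  by apply: eq_bigl => y; rewrite ltn_ord.
rewrite P_sum_from; apply: ler_sum => y _; exact: P_le_tt.
Qed.

Definition Hc x k (u : R) : int := Num.ceil (SS k.+1 - u) - Num.ceil (SS (fx x) - u).
Definition Zc x k (u : R) : bool := if k is k'.+1 then (1 <= Hc x k' u)%R else false.
Definition Du (u : R) : 'M[R]_(M,N) := \matrix_(x, y) ((Zc x y.+1 u)%:R - (Zc x y u)%:R).
Definition Tc (y : nat) (u : R) : int := Num.ceil (SS y.+1 - u) - Num.ceil (SS y - u).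

Lemma ceil_mono (a b : R) : a <= b -> Num.ceil a <= Num.ceil b.
Proof. exact: Num.Theory.le_ceil. Qed.

Lemma Hc_mono x k u : Hc x k u <= Hc x k.+1 u.
Proof. by rewrite /Hc lerD2r ceil_mono // lerD2r SS_mono. Qed.

Lemma Zc_monok x k k' u : (k <= k')%N -> Zc x k u -> Zc x k' u.
Proof.
move=> /subnKC <-; elim: (k' - k)%N => [|n IH]; first by rewrite addn0.
move=> h; have := IH h; rewrite addnS.
case: (k + n)%N => [//|m] /= h1; exact: le_trans h1 (Hc_mono _ _ _).
Qed.

Lemma Zc_big x k u : 1 <= SS k - SS (fx x) -> Zc x k u.
Proof.
case: k => [|k] /=.
  have := SS_mono (leq0n (fx x)); rewrite SS0 => h1 h2; lra.
move=> h; rewrite /Hc.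
have h1 := Num.Theory.ceilB1_lt (SS (fx x) - u); rewrite intrB in h1.
have h2 : Num.ceil (SS (fx x) - u) < Num.ceil (SS k.+1 - u).
  by rewrite Num.Theory.ceil_gt_int; lra.
lia.
Qed.

Lemma Hc_le1 x k u : SS k.+1 - SS (fx x) < 1 -> Hc x k u <= 1.
Proof.
move=> h; rewrite /Hc.
have h1 := Num.Theory.ceil_ge (SS (fx x) - u).
have : Num.ceil (SS k.+1 - u) <= Num.ceil (SS (fx x) - u) + 1.
  by rewrite Num.Theory.ceil_le_int intrD; lra.
lia.
Qed.

Lemma Zc0 x u : Zc x 0 u = false. Proof. by []. Qed.

Lemma ZcN x u : Zc x N u.
Proof. apply: Zc_big; exact: SS_ge1. Qed.

Lemma Du_cases u x y : Du u x y = 0 \/ (Du u x y = 1 /\ Zc x y.+1 u /\ ~~ Zc x y u).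
Proof.
rewrite /Du mxE.
case hz: (Zc x y u).
  by rewrite (Zc_monok (leqnSn y) hz) subrr; left.
by case: (Zc x y.+1 u); [right; rewrite subr0 | left; rewrite subrr].
Qed.

Lemma Du_nonneg u : nonneg (Du u).
Proof. by move=> x y; case: (Du_cases u x y) => [->|[->]] //; rewrite ler01. Qed.

Lemma Du_det u : deterministic (Du u).
Proof. by move=> x y; case: (Du_cases u x y) => [->|[->]]; [left|right]. Qed.

Lemma tele_ord (F : nat -> R) : \sum_(y < N) (F y.+1 - F y) = F N - F 0%N.
Proof. by rewrite -(big_mkord xpredT (fun k => F k.+1 - F k)) telescope_sumr. Qed.

Lemma Du_rows u x : \sum_(y < N) Du u x y = 1.
Proof.
rewrite (eq_bigr (fun y : 'I_N => (Zc x y.+1 u)%:R - (Zc x y u)%:R)); last by move=> y _; rewrite mxE.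
by rewrite (tele_ord (fun k => (Zc x k u)%:R)) ZcN Zc0 subr0.
Qed.

Lemma Du_supp u x (y : 'I_N) : Du u x y != 0 -> (fx x <= y)%N.
Proof.
case: (Du_cases u x y) => [->|[_ [hz _]] _]; first by rewrite eqxx.
rewrite leqNgt; apply/negP => hy.
move: hz => /=; rewrite /Hc.
have : Num.ceil (SS y.+1 - u) <= Num.ceil (SS (fx x) - u).
  by apply: ceil_mono; rewrite lerD2r; apply: SS_mono.
lia.
Qed.

Lemma Du_T u x (y : 'I_N) : Du u x y != 0 -> 1 <= Tc y u.
Proof.
case: (Du_cases u x y) => [->|[_ [hz hn]] _]; first by rewrite eqxx.
move: hz hn; rewrite /Tc /=; case: (nat_of_ord y) => [|y'] /= hz.
  move=> _; have : Num.ceil (SS 0 - u) <= Num.ceil (SS (fx x) - u).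
    by apply: ceil_mono; rewrite lerD2r; apply: SS_mono.
  move: hz; rewrite /Hc; lia.
by rewrite /Hc; move: hz; rewrite /Hc; lia.
Qed.

Lemma Tc_ge0 y u : 0 <= Tc y u.
Proof. by rewrite /Tc subr_ge0 ceil_mono // lerD2r SS_mono. Qed.

Lemma Du_scheme u : is_scheme p c (Du u).
Proof.
have hok : okm (Du u).
  move=> x y px hpos; apply: c_fin_f => //; apply: (Du_supp (u := u)).
  by rewrite gt_eqF.
split; first exact: Du_nonneg.
split; first exact: Du_rows.
by rewrite (cost_fin (@Du_nonneg u) hok) ltry.
Qed.

Lemma ceilN_u (u : R) : 0 <= u < 1 -> Num.ceil (- u) = 0.
Proof. move=> /andP[h1 h2]; apply: Num.Theory.ceil_def; rewrite /=; apply/andP; split; rewrite ?intrB /=; lra. Qed.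

Lemma leak_Du u : 0 <= u < 1 ->
  leak (Du u) <= (Num.floor (leak P))%:~R + ((u < fracp (leak P))%R : nat)%:R.
Proof.
move=> hu; rewrite -ceil_split // -SSN.
have -> : (Num.ceil (SS N - u))%:~R = \sum_(y < N) (Tc y u)%:~R :> R.
  rewrite (eq_bigr (fun y : 'I_N => (Num.ceil (SS y.+1 - u))%:~R - (Num.ceil (SS y - u))%:~R)).
    by rewrite (tele_ord (fun k => (Num.ceil (SS k - u))%:~R)) SS0 sub0r ceilN_u // subr0.
  by move=> y _; rewrite /Tc intrB.
rewrite /leak; apply: ler_sum => y _; apply: bigmax_le; first by rewrite ler0z Tc_ge0.
move=> x _; case: (eqVneq (Du u x y) 0) => [->|ne]; first by rewrite ler0z Tc_ge0.
case: (Du_cases u x y) => [h|[-> _]]; first by rewrite h eqxx in ne.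
by rewrite ler1z (Du_T ne).
Qed.
Definition UU : seq R := undup (0 :: [seq fracp (SS k) | k <- iota 0 N.+1]).
Lemma UU_uniq : uniq UU. Proof. exact: undup_uniq. Qed.
Lemma UU0 : 0 \in UU. Proof. by rewrite mem_undup mem_head. Qed.
Lemma UU_range u : u \in UU -> 0 <= u < 1.
Proof.
rewrite mem_undup in_cons => /orP[/eqP->|/mapP[k _ ->]]; last exact: frac_range.
by rewrite lexx ltr01.
Qed.
Lemma frac_in k : (k <= N)%N -> fracp (SS k) \in UU.
Proof.
move=> hk; rewrite mem_undup in_cons; apply/orP; right; apply/mapP; exists k => //.
by rewrite mem_iota add0n ltnS.
Qed.

Local Notation E := (EE UU).
Local Notation Ec := (EE_const UU_uniq UU0 UU_range).

Lemma E_ceil k : (k <= N)%N -> E (fun u => (Num.ceil (SS k - u))%:~R) = SS k.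
Proof.
move=> hk.
rewrite (@EE_eq _ _ _ (fun u => (Num.floor (SS k))%:~R + ((u < fracp (SS k))%R : nat)%:R)); last first.
  by move=> u uU; rewrite ceil_split // UU_range.
rewrite EE_add Ec (EE_indic UU_uniq UU0 UU_range) ?frac_in // /fracp.
by rewrite addrC subrK.
Qed.

Lemma E_ge0 F : (forall u, 0 <= F u) -> 0 <= E F.
Proof.
move=> h; apply: le_trans (_ : E (fun _ => 0) <= _); first by rewrite Ec.
by apply: (EE_mono UU_range) => u _; exact: h.
Qed.

Lemma E_Z x k : (k <= N)%N -> \sum_(y < N | (y < k)%N) P x y <= E (fun u => (Zc x k u)%:R).
Proof.
have Ege0 : 0 <= E (fun u => (Zc x k u)%:R) by apply: E_ge0 => u; exact: ler0n.
case: k Ege0 => [|k] Ege0 hk.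
  by rewrite big_pred0.
case: (ltnP k (fx x)) => hkf.
  by rewrite big1 // => y hy; apply: P_zero; apply: leq_ltn_trans hkf.
have hle : \sum_(y < N | (y < k.+1)%N) P x y <= SS k.+1 - SS (fx x).
  rewrite P_sum_from SS_diff; last exact: leqW.
  by apply: ler_sum => y _; exact: P_le_tt.
have hle1 : \sum_(y < N | (y < k.+1)%N) P x y <= 1.
  rewrite -(P_rows x) [X in _ <= X](bigID (fun y : 'I_N => (y < k.+1)%N)) /= lerDl.
  by apply: sumr_ge0 => y _; exact: P_ge0.
case: (lerP 1 (SS k.+1 - SS (fx x))) => h.
  rewrite (@EE_eq _ _ _ (fun _ => 1)) ?Ec // => u _.
  by rewrite Zc_big.
apply: le_trans hle _.
have hE : E (fun u => (Hc x k u)%:~R) = SS k.+1 - SS (fx x).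
  rewrite (@EE_eq _ _ _ (fun u => (Num.ceil (SS k.+1 - u))%:~R - (Num.ceil (SS (fx x) - u))%:~R)).
    by rewrite EE_sub !E_ceil // ltnW.
  by move=> u _; rewrite /Hc intrB.
rewrite -hE; apply: (EE_mono UU_range) => u _ /=.
have h1 := @Hc_le1 x k u h.
case hb: (1 <= Hc x k u)%R.
  have -> : Hc x k u = 1 by apply/eqP; rewrite eq_le h1 hb.
  by [].
by rewrite /= lerz0; move: hb; lia.
Qed.
Definition rowc (Q : 'M[R]_(M,N)) x := \sum_(y < N) Q x y * cr x y.

Lemma rc_rowc Q : rc Q = \sum_x p x * rowc Q x.
Proof.
rewrite /rc /rowc; apply: eq_bigr => x _; rewrite mulr_sumr.
by apply: eq_bigr => y _; rewrite mulrA.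
Qed.

Lemma Du_zero u x (y : 'I_N) : (y < fx x)%N -> Du u x y = 0.
Proof.
move=> hy; apply/eqP; apply/negP => /negP h.
by have := Du_supp h; rewrite leqNgt hy.
Qed.

Lemma pref_sum x k : (k <= N)%N ->
  \sum_(i < k) (E (fun u => Du u x (inord i)) - P x (inord i)) =
  E (fun u => (Zc x k u)%:R) - \sum_(y < N | (y < k)%N) P x y.
Proof.
move=> hk; rewrite sumrB; congr (_ - _).
  rewrite -EE_sum; apply: EE_eq => u _.
  rewrite (eq_bigr (fun i : 'I_k => (Zc x i.+1 u)%:R - (Zc x i u)%:R)).
    by rewrite -(big_mkord xpredT (fun i => (Zc x i.+1 u)%:R - (Zc x i u)%:R)) telescope_sumr // Zc0 subr0.
  by move=> i _; rewrite mxE inordK // (leq_trans (ltn_ord i) hk).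
rewrite (big_ord_widen _ (fun i => P x (inord i)) hk).
by apply: eq_bigr => y _; rewrite inord_val.
Qed.

Lemma E_rowc x : 0 < p x -> E (fun u => rowc (Du u) x) <= rowc P x.
Proof.
move=> px.
pose g := fun y : 'I_N => E (fun u => Du u x y).
have hL : E (fun u => rowc (Du u) x) = \sum_(y < N) g y * cr x y.
  rewrite /rowc EE_sum; apply: eq_bigr => y _.
  rewrite (@EE_eq _ _ _ (fun u => cr x y * Du u x y)); last by move=> u _; rewrite mulrC.
  by rewrite EE_mulc mulrC.
rewrite hL -subr_le0 /rowc -sumrB.
pose d := fun i : nat => g (inord i) - P x (inord i).
pose cc := fun i : nat => cr x (inord (maxn i (fx x))).
have -> : \sum_(y < N) (g y * cr x y - P x y * cr x y) = \sum_(i < N) d i * cc i.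
  apply: eq_bigr => y _; rewrite /d /cc inord_val.
  case: (ltnP y (fx x)) => hy.
    have g0 : g y = 0.
      rewrite /g (@EE_eq _ _ _ (fun _ => 0)) ?Ec // => u _.
      exact: Du_zero.
    by rewrite g0 P_zero //; ring.
  by rewrite ?(maxn_idPl hy) inord_val mulrBl.
apply: abel_le.
- move=> k hk; rewrite /d /g pref_sum // subr_ge0; exact: E_Z.
- rewrite /d /g pref_sum // (@EE_eq _ _ _ (fun _ => 1)) ?Ec; last by move=> u _; rewrite ZcN.
  rewrite (_ : \sum_(y < N | (y < N)%N) P x y = 1) ?subrr //.
  by rewrite -(P_rows x); apply: eq_bigl => y; rewrite ltn_ord.
- move=> i hi; rewrite /cc.
  have ha : (maxn i (fx x) < N)%N by rewrite gtn_max (ltnW hi) ltn_ord.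
  have hb : (maxn i.+1 (fx x) < N)%N by rewrite gtn_max hi ltn_ord.
  have hab : (maxn i (fx x) <= maxn i.+1 (fx x))%N by lia.
  move: hab; rewrite leq_eqVlt => /orP[/eqP->//|hab].
  have fa : (c x (inord (maxn i (fx x))) < +oo)%E.
    by apply: c_fin_f => //; rewrite inordK // leq_maxr.
  have hlt : (nat_of_ord (@inord N' (maxn i (fx x))) < @inord N' (maxn i.+1 (fx x)))%N.
    by rewrite !inordK.
  have [le_ab fb] := hc.2 _ _ x hlt fa.
  by apply: fine_le => //; rewrite ge0_fin_numE.
Qed.

Lemma E_rc : E (fun u => rc (Du u)) <= rc P.
Proof.
rewrite (@EE_eq _ _ _ (fun u => \sum_x p x * rowc (Du u) x)); last by move=> u _; rewrite rc_rowc.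
rewrite EE_sum rc_rowc; apply: ler_sum => x _.
rewrite EE_mulc; have := p_ge0 x; rewrite le_eqVlt => /orP[/eqP<-|px].
  by rewrite !mul0r.
by apply: ler_wpM2l; [exact: ltW | exact: E_rowc].
Qed.
Lemma rounding : exists D1 D2 : 'M[R]_(M,N),
  is_scheme p c D1 /\ deterministic D1 /\ is_scheme p c D2 /\ deterministic D2 /\
  leak D1 <= (Num.floor (leak P))%:~R + 1 /\ leak D2 <= (Num.floor (leak P))%:~R /\
  fracp (leak P) * rc D1 + (1 - fracp (leak P)) * rc D2 <= rc P.
Proof.
set lam := fracp (leak P).
have lamU : lam \in UU by rewrite /lam -SSN frac_in.
have [u1 [u1U h1]] : exists u1, u1 \in UU /\
    (forall u, u \in UU -> u < lam -> rc (Du u1) <= rc (Du u)).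
  case: (eqVneq [seq u <- UU | u < lam] [::]) => [e|ne].
    exists lam; split => // u uU ult; exfalso.
    have : u \in [seq u <- UU | u < lam] by rewrite mem_filter ult uU.
    by rewrite e.
  have [v vU hv] := seq_argmin (fun u => rc (Du u)) ne.
  move: vU; rewrite mem_filter => /andP[_ vU].
  by exists v; split => // u uU ult; apply: hv; rewrite mem_filter ult uU.
have [u2 [u2U [u2n h2]]] : exists u2, u2 \in UU /\ ~~ (u2 < lam) /\
    (forall u, u \in UU -> ~~ (u < lam) -> rc (Du u2) <= rc (Du u)).
  have ne : [seq u <- UU | ~~ (u < lam)] != [::].
    apply/eqP => e; have : lam \in [seq u <- UU | ~~ (u < lam)].
      by rewrite mem_filter ltxx lamU.
    by rewrite e.
  have [v vU hv] := seq_argmin (fun u => rc (Du u)) ne.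
  move: vU; rewrite mem_filter => /andP[vn vU].
  by exists v; split => //; split => // u uU ult; apply: hv; rewrite mem_filter ult uU.
exists (Du u1), (Du u2).
split; first exact: Du_scheme.
split; first exact: Du_det.
split; first exact: Du_scheme.
split; first exact: Du_det.
split.
  apply: le_trans (leak_Du (UU_range u1U)) _; rewrite lerD2l.
  by case: (u1 < lam)%R.
split.
  apply: le_trans (leak_Du (UU_range u2U)) _.
  by rewrite -/lam (negPf u2n) addr0.
apply: le_trans E_rc.
have s1 : \sum_(u <- UU | u < lam) wt UU u = lam.
  by apply: (tele UU_uniq UU0 UU_range); rewrite lamU.
have s2 : \sum_(u <- UU | ~~ (u < lam)) wt UU u = 1 - lam.
  have := wt_sum1 UU_uniq UU0 UU_range; rewrite (bigID (fun u => u < lam)) /= s1.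
  move=> e; rewrite -e; ring.
rewrite /EE (bigID (fun u => u < lam)) /=.
apply: lerD.
  have -> : lam * rc (Du u1) = \sum_(u <- UU | u < lam) wt UU u * rc (Du u1).
    by rewrite -mulr_suml s1.
  rewrite big_seq_cond [X in _ <= X]big_seq_cond.
  apply: ler_sum => u /andP[uU ult].
  by apply: ler_wpM2l; [exact: wt_ge0 UU_range _ uU | exact: h1].
have -> : (1 - lam) * rc (Du u2) = \sum_(u <- UU | ~~ (u < lam)) wt UU u * rc (Du u2).
  by rewrite -mulr_suml s2.
rewrite big_seq_cond [X in _ <= X]big_seq_cond.
apply: ler_sum => u /andP[uU ult].
by apply: ler_wpM2l; [exact: wt_ge0 UU_range _ uU | exact: h2].
Qed.
End Round.
Definition gconst : {ffun 'I_M -> 'I_N} := [ffun _ => ord_max].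

Lemma gconst_ok : (exists P : 'M[R]_(M,N), is_scheme p c P) ->
  is_scheme p c (mx gconst) /\ leak (mx gconst) <= 1.
Proof.
move=> [P hP].
have hok : okm (mx gconst).
  move=> x y px; rewrite mxE ffunE; case: eqP => [<- _|]; last by rewrite ltxx.
  by apply: (c_fin_f hP px); rewrite /= -ltnS.
have hs : is_scheme p c (mx gconst).
  by apply: mx_scheme; rewrite (cost_fin (@mx_nonneg _) hok) ltry.
split => //.
rewrite /leak -(mx_rows gconst (Ordinal M_gt0)); apply: ler_sum => y _.
apply: bigmax_le; first by rewrite mxE ler0n.
by move=> x _; rewrite !mxE !ffunE.
Qed.

Definition feas (k : R) (g : {ffun 'I_M -> 'I_N}) : bool :=
  (cost p c (mx g) < +oo)%E && (leak (mx g) <= k).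

Lemma opt_det (k : R) : (exists P : 'M[R]_(M,N), is_scheme p c P) -> 1 <= k ->
  exists g, feas k g /\ forall D, is_scheme p c D -> deterministic D -> leak D <= k ->
     rc (mx g) <= rc D.
Proof.
move=> hex hk; have [hs hl] := gconst_ok hex.
have [g [hg hmin]] := @fin_argmin R _ (feas k) (fun g => rc (mx g))
  (ex_intro _ gconst (introT andP (conj (let: conj _ (conj _ h) := hs in h) (le_trans hl hk)))).
exists g; split => // D hD hdet hlD.
have [g' e] := det_mx hD hdet; subst D.
apply: hmin; apply/andP; split => //; by case: hD => _ [].
Qed.

Lemma feas_scheme k g : feas k g -> is_scheme p c (mx g).
Proof. by move=> /andP[h _]; exact: mx_scheme. Qed.

Lemma leak_split (Q : 'M[R]_(M,N)) :
  leak Q = (Num.floor (leak Q))%:~R + fracp (leak Q).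
Proof. by rewrite /fracp addrC subrK. Qed.
Lemma part1_main (hex : exists P : 'M[R]_(M,N), is_scheme p c P) (alpha : R) :
  0 < alpha -> exists v : R, is_min_obj (S p c) alpha v /\ is_min_obj (S_d p c) alpha v.
Proof.
move=> ha; have [hs1 hl1] := gconst_ok hex.
have [g [hg hmin]] := @fin_argmin R _ (fun g => (cost p c (mx g) < +oo)%E)
   (fun g => rc (mx g) + alpha * leak (mx g))
   (ex_intro _ gconst (let: conj _ (conj _ h) := hs1 in h)).
set v := rc (mx g) + alpha * leak (mx g).
have lb : forall Q, is_scheme p c Q -> v <= rc Q + alpha * leak Q.
  move=> Q hQ; have [D1 [D2 [s1 [d1 [s2 [d2 [l1 [l2 hr]]]]]]]] := rounding hQ.
  have [g1 e1] := det_mx s1 d1; have [g2 e2] := det_mx s2 d2.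
  have v1 : v <= rc D1 + alpha * leak D1.
    by rewrite e1; apply: hmin; rewrite -e1; case: s1 => _ [].
  have v2 : v <= rc D2 + alpha * leak D2.
    by rewrite e2; apply: hmin; rewrite -e2; case: s2 => _ [].
  have /andP[lam0 lam1] := frac_range (leak Q).
  have ls := leak_split Q.
  move: hr l1 l2 ls v1 v2 lam0 lam1.
  set lam := fracp (leak Q); set m : R := (Num.floor (leak Q))%:~R.
  move=> hr l1 l2 ls v1 v2 lam0 lam1.
  have h1 := ler_wpM2l lam0 v1.
  have h1' : 0 <= 1 - lam by rewrite subr_ge0 ltW.
  have h2' := ler_wpM2l h1' v2.
  have h3 := ler_wpM2l (mulr_ge0 lam0 (ltW ha)) l1.
  have h4 := ler_wpM2l (mulr_ge0 h1' (ltW ha)) l2.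
  nra.
exists v; split; split.
- exists (leak (mx g), rc (mx g)); split => //.
  exists (mx g); split; first exact: mx_scheme.
  by split => //=; rewrite (scheme_rc (mx_scheme hg)).
- move=> [l C] [Q [hQ [hl hC]]] /=.
  move: hC; rewrite (scheme_rc hQ) lee_fin => hC.
  apply: le_trans (lb Q hQ) _; apply: lerD => //.
  by apply: ler_wpM2l => //; exact: ltW.
- exists (leak (mx g), rc (mx g)); split => //.
  exists (mx g); split; first exact: mx_scheme.
  split; first exact: mx_det.
  by split => //=; rewrite (scheme_rc (mx_scheme hg)).
- move=> [l C] [Q [hQ [_ [hl hC]]]] /=.
  move: hC; rewrite (scheme_rc hQ) lee_fin => hC.
  apply: le_trans (lb Q hQ) _; apply: lerD => //.
  by apply: ler_wpM2l => //; exact: ltW.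
Qed.
Lemma part2_main (hex : exists P : 'M[R]_(M,N), is_scheme p c P) (L : R) :
  1 <= L ->
     exists (lambda : R) (P1 P2 : 'M[R]_(M, N)),
       0 <= lambda <= 1 /\
       is_scheme p c P1 /\ deterministic P1 /\
       is_scheme p c P2 /\ deterministic P2 /\
       let P := lambda *: P1 + (1 - lambda) *: P2 in
       is_scheme p c P /\ achieves p c P L (Cstar p c L) /\
       Cstar p c L <= lambda * Cstar_d p c (leak P1)
                      + (1 - lambda) * Cstar_d p c (leak P2).
Proof.
move=> hL.
set n : R := (Num.floor L)%:~R; set th := fracp L.
have /andP[th0 th1] : 0 <= th < 1 := frac_range L.
have hn1 : 1 <= n by rewrite /n ler1z Num.Theory.floor_ge_int.
have [g1 [f1 o1]] := @opt_det (n + 1) hex ltac:(lra).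
have [g2 [f2 o2]] := @opt_det n hex hn1.
set P1 := mx g1; set P2 := mx g2.
have sP1 : is_scheme p c P1 := feas_scheme f1.
have sP2 : is_scheme p c P2 := feas_scheme f2.
have lP1 : leak P1 <= n + 1 by case/andP: f1.
have lP2 : leak P2 <= n by case/andP: f2.
have rc12 : rc P1 <= rc P2 by apply: o1 => //; [exact: mx_det | lra].
have Lsplit : L = n + th by rewrite /th /fracp /n addrC subrK.
have lemB : forall Q, is_scheme p c Q -> leak Q <= L ->
    th * rc P1 + (1 - th) * rc P2 <= rc Q.
  move=> Q hQ hlQ; have [D1 [D2 [s1 [d1 [s2 [d2 [l1 [l2 hr]]]]]]]] := rounding hQ.
  have /andP[lam0 lam1] := frac_range (leak Q).
  have ls := leak_split Q.
  have hmn : Num.floor (leak Q) <= Num.floor L by apply: Num.Theory.le_floor.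
  move: hr l1 l2 ls lam0 lam1.
  set lam := fracp (leak Q); set m : R := (Num.floor (leak Q))%:~R.
  move=> hr l1 l2 ls lam0 lam1.
  have h1' : 0 <= 1 - lam by rewrite subr_ge0 ltW.
  case: (eqVneq (Num.floor (leak Q)) (Num.floor L)) => e.
    have emn : m = n by rewrite /m /n e.
    have r1 : rc P1 <= rc D1 by apply: o1 => //; rewrite -emn.
    have r2 : rc P2 <= rc D2 by apply: o2 => //; rewrite -emn.
    have lth : lam <= th by lra.
    have h1 := ler_wpM2l lam0 r1.
    have h2 := ler_wpM2l h1' r2.
    have h3 : 0 <= (th - lam) * (rc P2 - rc P1) by apply: mulr_ge0; lra.
    have -> : th * rc P1 + (1 - th) * rc P2 =
       lam * rc P1 + (1 - lam) * rc P2 - (th - lam) * (rc P2 - rc P1) by ring.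
    lra.
  have hlt : Num.floor (leak Q) + 1 <= Num.floor L.
    by rewrite lezD1 lt_neqAle e hmn.
  have hlt' : m + 1 <= n by rewrite /m /n -[1]/(1%:~R) -intrD ler_int.
  have r1 : rc P2 <= rc D1 by apply: o2 => //; lra.
  have r2 : rc P2 <= rc D2 by apply: o2 => //; lra.
  have h1 := ler_wpM2l lam0 r1.
  have h2 := ler_wpM2l h1' r2.
  have h3 : th * (rc P1 - rc P2) <= 0 by apply: mulr_ge0_le0; lra.
  have -> : th * rc P1 + (1 - th) * rc P2 = rc P2 + th * (rc P1 - rc P2) by ring.
  have e2 : lam * rc P2 + (1 - lam) * rc P2 = rc P2 by ring.
  lra.
exists th, P1, P2.
split; first by rewrite th0 ltW.
split => //; split; first exact: mx_det.
split => //; split; first exact: mx_det.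
move=> P.
have hPe : forall x y, P x y = th * P1 x y + (1 - th) * P2 x y.
  by move=> x y; rewrite /P !mxE.
have [n1 [r1 _]] := sP1; have [n2 [r2 _]] := sP2.
have hnn : nonneg P.
  move=> x y; rewrite hPe; apply: addr_ge0; apply: mulr_ge0 => //; lra.
have hok : okm P.
  move=> x y px; rewrite hPe => hpos.
  case: (ltP 0 (P1 x y)) => q1; first exact: (scheme_okm sP1 px q1).
  case: (ltP 0 (P2 x y)) => q2; first exact: (scheme_okm sP2 px q2).
  have e1 : P1 x y = 0 by apply/eqP; rewrite eq_le q1 n1.
  have e2 : P2 x y = 0 by apply/eqP; rewrite eq_le q2 n2.
  by move: hpos; rewrite e1 e2 !mulr0 addr0 ltxx.
have rcP : rc P = th * rc P1 + (1 - th) * rc P2.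
  rewrite /rc !mulr_sumr -big_split; apply: eq_bigr => x _.
  rewrite !mulr_sumr -big_split; apply: eq_bigr => y _.
  rewrite hPe /=; ring.
have hs : is_scheme p c P.
  split => //; split; last by rewrite (cost_fin hnn hok) ltry.
  move=> x; rewrite (eq_bigr (fun y => th * P1 x y + (1 - th) * P2 x y)); last by move=> y _; rewrite hPe.
  by rewrite big_split /= -!mulr_sumr r1 r2; ring.
have lPL : leak P <= L.
  apply: le_trans (leak_mix n1 n2 _) _; first by rewrite th0 ltW.
  have hh1 := ler_wpM2l th0 lP1.
  have h1t : 0 <= 1 - th by lra.
  have hh2 := ler_wpM2l h1t lP2.
  have -> : L = th * (n + 1) + (1 - th) * n by rewrite Lsplit; ring.
  lra.
have lbS : forall C, S p c (L, C) -> rc P <= C.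
  move=> C [Q [hQ [hlQ hCQ]]]; move: hCQ; rewrite /= (scheme_rc hQ) lee_fin => hCQ.
  by rewrite rcP; apply: le_trans (lemB Q hQ hlQ) hCQ.
have inS : S p c (L, rc P).
  by exists P; split => //; split => //=; rewrite (scheme_rc hs).
have CL : rc P <= Cstar p c L.
  by apply: lb_le_inf; [exists (rc P) | exact: lbS].
have CL' : Cstar p c L <= rc P.
  by apply: (ge_inf _ inS); exists (rc P) => C hC; exact: lbS.
split => //; split.
  by split => //; rewrite (scheme_rc hs) lee_fin.
have d1 : rc P1 <= Cstar_d p c (leak P1).
  apply: lb_le_inf.
    exists (rc P1); exists P1; split => //; split; first exact: mx_det.
    by split => //=; rewrite (scheme_rc sP1).
  move=> C [Q [hQ [dQ [hlQ hCQ]]]]; move: hCQ; rewrite /= (scheme_rc hQ) lee_fin => hCQ.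
  by apply: le_trans hCQ; apply: o1 => //; apply: le_trans hlQ lP1.
have d2 : rc P2 <= Cstar_d p c (leak P2).
  apply: lb_le_inf.
    exists (rc P2); exists P2; split => //; split; first exact: mx_det.
    by split => //=; rewrite (scheme_rc sP2).
  move=> C [Q [hQ [dQ [hlQ hCQ]]]]; move: hCQ; rewrite /= (scheme_rc hQ) lee_fin => hCQ.
  by apply: le_trans hCQ; apply: o2 => //; apply: le_trans hlQ lP2.
apply: le_trans CL' _; rewrite rcP.
apply: lerD; apply: ler_wpM2l => //; lra.
Qed.
End Main.

Theorem theorem1 (R : realType) (M N : nat) (p : 'I_M -> R)
  (c : 'I_M -> 'I_N -> \bar R)
  (hp : is_distribution p)
  (hc0 : forall x y, (0 <= c x y)%E)
  (hc : staircase_nondecreasing c)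
  (hex : exists P : 'M[R]_(M, N), is_scheme p c P) :
  (forall alpha : R, 0 < alpha ->
     exists v : R, is_min_obj (S p c) alpha v /\ is_min_obj (S_d p c) alpha v) /\
  (forall L : R, 1 <= L ->
     exists (lambda : R) (P1 P2 : 'M[R]_(M, N)),
       0 <= lambda <= 1 /\
       is_scheme p c P1 /\ deterministic P1 /\
       is_scheme p c P2 /\ deterministic P2 /\
       let P := lambda *: P1 + (1 - lambda) *: P2 in
       is_scheme p c P /\ achieves p c P L (Cstar p c L) /\
       Cstar p c L <= lambda * Cstar_d p c (leak P1)
                      + (1 - lambda) * Cstar_d p c (leak P2)).
Proof.
have M0 := M_gt0 hp.
move: c hc0 hc hex; case: N => [|N'] c hc0 hc hex.
  exfalso; case: hex => P [_ [hrow _]].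
  by have := hrow (Ordinal M0); rewrite big_ord0 => /eqP; rewrite eq_sym oner_eq0.
split.
  by move=> alpha ha; exact: (part1_main hp hc0 hc hex ha).
by move=> L hL; exact: (part2_main hp hc0 hc hex hL).
Qed.
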